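(* For every integer $n\ge2$, if $T$ is a uniformly random standard Young tableau of shape $(n,n,n)$, then $T_{1,2}\in\{2,3,4\}$ and $$\mathbb E\big[x^{T_{1,2}}\big]=\frac{2(n-1)}{3n-1}\,x^2+\frac{8(n-1)(n+1)}{3(3n-1)(3n-2)}\,x^3+\frac{(n+1)(n+2)}{3(3n-1)(3n-2)}\,x^4 .$$
   Context: A standard Young tableau of shape $(n,n,n)$ is a bijective filling $T$ of the cells $[a,b]$ ($1\le a\le 3$, $1\le b\le n$; row $a$, column $b$) by $\{1,\dots,3n\}$ that increases along each row and down each column. $T_{a,b}$ denotes the entry in cell $[a,b]$. *)

(* Defs.v *)
From mathcomp Require Import all_boot all_order all_algebra.
Set Implicit Arguments. Unset Strict Implicit. Unset Printing Implicit Defensive.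

(* A filling of the shape (n,n,n): cell (a,b) with a : 'I_3 (row a+1),
   b : 'I_n (column b+1); the stored value v : 'I_(3n) represents the
   entry v+1 in {1,...,3n}. *)
Definition filling (n : nat) := {ffun 'I_3 * 'I_n -> 'I_(3 * n)}.

(* Entry T_{a,b} with 1-based indices a, b (0 outside the shape). *)
Definition entry (n : nat) (T : filling n) (a b : nat) : nat :=
  match @insub nat (fun i => i < 3) _ a.-1, @insub nat (fun j => j < n) _ b.-1 with
  | Some i, Some j => (T (i, j) : nat).+1
  | _, _ => 0
  end.

Definition is_syt (n : nat) (T : filling n) : bool :=
  [&& injectiveb T,
      [forall k : 'I_(3 * n), exists c, T c == k],
      [forall a : 'I_3, forall b1 : 'I_n, forall b2 : 'I_n,
          (b1 < b2) ==> (T (a, b1) < T (a, b2))] &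
      [forall b : 'I_n, forall a1 : 'I_3, forall a2 : 'I_3,
          (a1 < a2) ==> (T (a1, b) < T (a2, b))]].

Definition SYT (n : nat) : {set filling n} := [set T | is_syt T].

(* Main.v *)
Require Import Defs.
From mathcomp Require Import all_boot all_order all_algebra.
From mathcomp Require Import zify ring lra.
Import Order.TTheory GRing.Theory Num.Theory.
Set Implicit Arguments. Unset Strict Implicit. Unset Printing Implicit Defensive.

Fixpoint E (m p q r : nat) : seq (seq nat) :=
  if m is m'.+1 then
    (if 0 < r then map (cons 0) (E m' p q r.-1) else [::]) ++
    (if r < q then map (cons 1) (E m' p q.-1 r) else [::]) ++
    (if q < p then map (cons 2) (E m' p.-1 q r) else [::])
  else if [&& p == 0, q == 0 & r == 0] then [:: [::]] else [::].

Definition cnt (i : nat) (s : seq nat) : nat := count (fun x => x == i) s.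
Arguments cnt : simpl never.
Lemma cnt_cons i x s : cnt i (x :: s) = (x == i) + cnt i s. Proof. by []. Qed.
Lemma cnt_nil i : cnt i [::] = 0. Proof. by []. Qed.

Definition latt (d1 d2 : nat) (w : seq nat) : Prop :=
  forall k, cnt 1 (take k w) <= cnt 0 (take k w) + d1 /\
            cnt 2 (take k w) <= cnt 1 (take k w) + d2.

Lemma latt_nil d1 d2 : latt d1 d2 [::].
Proof. by move=> k /=; rewrite cnt_nil. Qed.

Lemma latt_cons0 d1 d2 w : latt d1 d2 (0 :: w) <-> latt d1.+1 d2 w.
Proof.
split=> H k.
  by move: (H k.+1) => /= [a b]; rewrite !cnt_cons ?take0 ?cnt_nil /= in a b; split; lia.
case: k => [|k] /=; rewrite ?cnt_nil ?cnt_cons /=; first by split; lia.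
by move: (H k) => [a b]; split; lia.
Qed.

Lemma latt_cons1 d1 d2 w : latt d1 d2 (1 :: w) <-> 0 < d1 /\ latt d1.-1 d2.+1 w.
Proof.
split.
  move=> H; split; first by move: (H 1) => /= [a b]; rewrite !cnt_cons ?take0 ?cnt_nil /= in a b; lia.
  by move=> k; move: (H k.+1) => /= [a b]; rewrite !cnt_cons ?take0 ?cnt_nil /= in a b; split; lia.
move=> [d1p H] [|k] /=; rewrite ?cnt_nil ?cnt_cons /=; first by split; lia.
by move: (H k) => [a b]; split; lia.
Qed.

Lemma latt_cons2 d1 d2 w : latt d1 d2 (2 :: w) <-> 0 < d2 /\ latt d1 d2.-1 w.
Proof.
split.
  move=> H; split; first by move: (H 1) => /= [a b]; rewrite !cnt_cons ?take0 ?cnt_nil /= in a b; lia.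
  by move=> k; move: (H k.+1) => /= [a b]; rewrite !cnt_cons ?take0 ?cnt_nil /= in a b; split; lia.
move=> [d1p H] [|k] /=; rewrite ?cnt_nil ?cnt_cons /=; first by split; lia.
by move: (H k) => [a b]; split; lia.
Qed.

Lemma mem_cons_map (x y : nat) w s :
  (x :: w \in map (cons y) s) = (x == y) && (w \in s).
Proof.
apply/mapP/andP.
  by case=> u us [-> ->]; split.
by case=> /eqP-> ws; exists w.
Qed.

Lemma nil_notin (y : nat) s : ([::] \in map (cons y) s) = false.
Proof. by apply/mapP; case. Qed.

Lemma mem_if (s : seq nat) b t : (s \in (if b then t else [::])) = b && (s \in t).
Proof. by case: b. Qed.

Definition Ep m p q r w := [/\ size w = m, all (fun x => x < 3) w,
   (cnt 0 w = r /\ cnt 1 w = q /\ cnt 2 w = p) & latt (q - r) (p - q) w].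

Lemma memEw w m p q r : r <= q -> q <= p -> (w \in E m p q r) <-> Ep m p q r w.
Proof.
rewrite /Ep.
elim: w m p q r => [|x w IH] [|m] p q r hrq hqp /=.
- case: ifP => H.
    move/and3P: H => [/eqP-> /eqP-> /eqP->]; split => // _; split => //; exact: latt_nil.
  split => //; case=> _ _ [h0 [h1 h2]] _; move: H; rewrite -h0 -h1 -h2 /=; by [].
- rewrite !mem_cat !mem_if !nil_notin !andbF.
  by split => //; case.
- by case: ifP; split => //; case.
- rewrite !mem_cat !mem_if !mem_cons_map !cnt_cons.
  case: x => [|[|[|x]]] /=.
  + rewrite !andbF ?orbF /=.
    split.
      have e1 : r.-1 <= q by lia.
      move/andP=> [rp /(IH _ _ _ _ e1 hqp)].
      case=> hs ha [h0 [h1 h2]] hl; split; [by rewrite hs | by [] | lia | ].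
      apply/latt_cons0; by have -> : (q - r).+1 = q - r.-1 by lia.
    case=> [[hs] ha [h0 [h1 h2]] hl].
    have rp : 0 < r by lia.
    rewrite rp /=; apply/IH; try lia.
    split=> //; first lia.
    move/latt_cons0: hl; by have -> : (q - r).+1 = q - r.-1 by lia.
  + rewrite !andbF ?orbF /=.
    split.
      move/andP=> [rq]; have e1 : r <= q.-1 by lia.
      have e2 : q.-1 <= p by lia.
      move/(IH _ _ _ _ e1 e2).
      case=> hs ha [h0 [h1 h2]] hl; split; [by rewrite hs | by [] | lia | ].
      apply/latt_cons1; split; first lia.
      rewrite (_ : (q - r).-1 = q.-1 - r); last lia.
      by rewrite (_ : (p - q).+1 = p - q.-1); last lia.
    case=> [[hs] ha [h0 [h1 h2]] /latt_cons1 [hd hl]].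
    have rq : r < q by lia.
    rewrite rq /=; apply/IH; try lia.
    split=> //; first lia.
    move: hl; rewrite (_ : (q - r).-1 = q.-1 - r); last lia.
    by rewrite (_ : (p - q).+1 = p - q.-1); last lia.
  + rewrite !andbF /=.
    split.
      move/andP=> [qp]; have e2 : q <= p.-1 by lia.
      move/(IH _ _ _ _ hrq e2).
      case=> hs ha [h0 [h1 h2]] hl; split; [by rewrite hs | by [] | lia | ].
      apply/latt_cons2; split; first lia.
      by have -> : (p - q).-1 = p.-1 - q by lia.
    case=> [[hs] ha [h0 [h1 h2]] /latt_cons2 [hd hl]].
    have qp : q < p by lia.
    rewrite qp /=; apply/IH; try lia.
    split=> //; first lia.
    by move: hl; have -> : (p - q).-1 = p.-1 - q by lia.
  + by rewrite !andbF; split => //; case.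
Qed.

Lemma uniq_if_map (a : nat) b s : uniq s -> uniq (if b then map (cons a) s else [::]).
Proof. by case: b => // us; rewrite map_inj_uniq // => x y []. Qed.

Lemma head_if_map (a : nat) b s u : u \in (if b then map (cons a) s else [::]) -> head 3 u = a.
Proof. by case: b => //; case/mapP => v _ ->. Qed.

Lemma uniqE m p q r : uniq (E m p q r).
Proof.
elim: m p q r => [|m IH] p q r /=; first by case: ifP.
rewrite !cat_uniq !uniq_if_map ?IH //= andbT.
apply/andP; split.
  apply/hasPn => u; rewrite mem_cat => /orP[] /head_if_map h; apply/negP => /head_if_map; by rewrite h.
apply/hasPn => u /head_if_map h; apply/negP => /head_if_map; by rewrite h.
Qed.


Lemma size_if_map (a : nat) b (s : seq (seq nat)) :
  size (if b then map (cons a) s else [::]) = if b then size s else 0.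
Proof. by case: b; rewrite ?size_map. Qed.

Lemma E_S m p q r : E m.+1 p q r =
    (if 0 < r then map (cons 0) (E m p q r.-1) else [::]) ++
    (if r < q then map (cons 1) (E m p q.-1 r) else [::]) ++
    (if q < p then map (cons 2) (E m p.-1 q r) else [::]).
Proof. by []. Qed.

Lemma Ecard m r y x : m = 3 * r + 2 * y + x ->
  size (E m (r + y + x) (r + y) r) * ((r + y + x).+2`! * (r + y).+1`! * r`!)
  = m`! * (x.+1 * (x + y).+2 * y.+1).
Proof.
elim: m r y x => [|m IH] r y x hm.
  have [-> [-> ->]] : r = 0 /\ y = 0 /\ x = 0 by lia.
  by [].
rewrite E_S !size_cat !size_if_map.
have T1 : (if 0 < r then size (E m (r+y+x) (r+y) r.-1) else 0)
     * ((r + y + x).+2`! * (r + y).+1`! * r`!) = m`! * (r * (x.+1 * (x+y).+3 * y.+2)).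
  case: r hm => [|r'] hm; first by rewrite /= !muln0.
  have e := IH r' y.+1 x ltac:(lia).
  rewrite (_ : r'.+1 + y + x = r' + y.+1 + x); last lia.
  rewrite (_ : r'.+1 + y = r' + y.+1); last lia.
  rewrite /= [(r'.+1)`!]factS.
  transitivity (r'.+1 * (size (E m (r' + y.+1 + x) (r' + y.+1) r') *
     ((r' + y.+1 + x).+2`! * (r' + y.+1).+1`! * r'`!))); first ring.
  rewrite e; ring.
have T2 : (if r < r + y then size (E m (r+y+x) (r+y).-1 r) else 0)
     * ((r + y + x).+2`! * (r + y).+1`! * r`!) = m`! * ((r+y).+1 * (x.+2 * (x+y).+2 * y)).
  case: y hm T1 => [|y'] hm _; first by rewrite addn0 ltnn /= !muln0.
  have e := IH r y' x.+1 ltac:(lia).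
  rewrite (_ : r < r + y'.+1); last lia.
  rewrite (_ : r + y'.+1 + x = r + y' + x.+1); last lia.
  rewrite (_ : (r + y'.+1).-1 = r + y'); last lia.
  rewrite (_ : r + y'.+1 = (r + y').+1); last lia.
  rewrite [(r + y').+2`!]factS.
  transitivity ((r + y').+2 * (size (E m (r + y' + x.+1) (r + y') r) *
     ((r + y' + x.+1).+2`! * (r + y').+1`! * r`!))); first ring.
  rewrite e; ring.
have T3 : (if r + y < r + y + x then size (E m (r+y+x).-1 (r+y) r) else 0)
     * ((r + y + x).+2`! * (r + y).+1`! * r`!) = m`! * ((r+y+x).+2 * (x * (x+y).+1 * y.+1)).
  case: x hm T1 T2 => [|x'] hm _ _; first by rewrite addn0 ltnn /= !muln0.
  have e := IH r y x' ltac:(lia).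
  rewrite (_ : r + y < r + y + x'.+1); last lia.
  rewrite (_ : (r + y + x'.+1).-1 = r + y + x'); last lia.
  rewrite (_ : r + y + x'.+1 = (r + y + x').+1); last lia.
  rewrite [(r + y + x').+3`!]factS.
  transitivity ((r + y + x').+3 * (size (E m (r + y + x') (r + y) r) *
     ((r + y + x').+2`! * (r + y).+1`! * r`!))); first ring.
  rewrite e; ring.
set D := ((r + y + x).+2`! * (r + y).+1`! * r`!) in T1 T2 T3 *.
set a := (if 0 < r then _ else _) in T1 *.
set b := (if r < r + y then _ else _) in T2 *.
set c := (if r + y < r + y + x then _ else _) in T3 *.
rewrite (_ : (a + (b + c)) * D = a * D + (b * D + c * D)); last ring.
rewrite T1 T2 T3 factS hm; ring.
Qed.


Lemma cnt_cat a s t : cnt a (s ++ t) = cnt a s + cnt a t.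
Proof. exact: count_cat. Qed.

Lemma cnt_take_le a w k1 k2 : k1 <= k2 -> cnt a (take k1 w) <= cnt a (take k2 w).
Proof.
move=> h; rewrite -(subnKC h) takeD cnt_cat; lia.
Qed.

Lemma cnt_take_S a w k : k < size w ->
  cnt a (take k.+1 w) = cnt a (take k w) + (nth 3 w k == a).
Proof.
move=> h; rewrite (take_nth 3 h) -cats1 cnt_cat; congr (_ + _).
by rewrite /cnt /= addn0.
Qed.

Lemma cnt_take_all a w : cnt a (take (size w) w) = cnt a w.
Proof. by rewrite take_size. Qed.

Lemma exist_pos a w j : j < cnt a w ->
  exists k, [/\ k < size w, nth 3 w k = a & cnt a (take k w) = j].
Proof.
elim: w j => [|x w IH] j; first by rewrite cnt_nil.
rewrite cnt_cons.
case: (eqVneq x a) => [->|xa] /=.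
  case: j => [|j] hj.
    by exists 0; rewrite /= cnt_nil.
  have [k [hk hn hc]] := IH j ltac:(lia).
  by exists k.+1; rewrite /= cnt_cons eqxx hc; split.
move=> hj; have [k [hk hn hc]] := IH j ltac:(lia).
by exists k.+1; rewrite /= cnt_cons (negbTE xa) hc; split.
Qed.

Lemma nth_lt_size w k a : a != 3 -> nth 3 w k = a -> k < size w.
Proof.
move=> ha hn; rewrite ltnNge; apply/negP => /(nth_default 3); rewrite hn.
by move/eqP: ha.
Qed.

Lemma uniq_pos a w k1 k2 : a != 3 -> nth 3 w k1 = a -> nth 3 w k2 = a ->
  cnt a (take k1 w) = cnt a (take k2 w) -> k1 = k2.
Proof.
move=> ha.
wlog: k1 k2 / k1 <= k2.
  move=> H h1 h2 hc; case: (leqP k1 k2) => hk; first exact: H.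
  by symmetry; apply: H => //; lia.
move=> hk h1 h2 hc.
case: (ltnP k1 k2) => hk'; last lia.
have s1 := nth_lt_size ha h1.
have := cnt_take_le a w hk'; rewrite cnt_take_S // h1 eqxx; lia.
Qed.

Section Tw.
Variable n : nat.
Variable d : 'I_(3 * n).

Definition Tw (w : seq nat) : filling n :=
  [ffun c : 'I_3 * 'I_n => odflt d [pick k : 'I_(3 * n) |
      (nth 3 w k == c.1) && (cnt c.1 (take k w) == c.2)]].

Lemma ord3_neq3 (a : 'I_3) : (a : nat) != 3.
Proof. by case: a => a /= ha; apply/eqP => e; rewrite e in ha. Qed.

Lemma TwE w (c : 'I_3 * 'I_n) (k : 'I_(3 * n)) :
  nth 3 w k = c.1 -> cnt c.1 (take k w) = c.2 -> Tw w c = k.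
Proof.
move=> h1 h2; rewrite ffunE; case: pickP => [k' /andP[/eqP h1' /eqP h2'] | /(_ k)] /=.
  apply: val_inj => /=; apply: (uniq_pos (ord3_neq3 c.1) h1' h1); by rewrite h2 h2'.
by rewrite h1 h2 !eqxx.
Qed.

Variable w : seq nat.
Hypothesis hw : Ep (3 * n) n n n w.

Lemma hw_size : size w = 3 * n. Proof. by case: hw. Qed.
Lemma hw_all : all (fun x => x < 3) w. Proof. by case: hw. Qed.
Lemma hw_cnt (a : 'I_3) : cnt a w = n.
Proof.
case: hw => _ _ [h0 [h1 h2]] _.
by case: a => [[|[|[|a]]] ha] //=.
Qed.
Lemma hw_latt k (a1 a2 : 'I_3) : a1 < a2 -> cnt a2 (take k w) <= cnt a1 (take k w).
Proof.
case: hw => _ _ _; rewrite subnn => hl.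
move: (hl k) => [l1 l2]; rewrite !addn0 in l1 l2.
case: a1 => [[|[|[|a1]]] h1] //=; case: a2 => [[|[|[|a2]]] h2] //= _; lia.
Qed.

Lemma Tw_spec c : nth 3 w (Tw w c) = c.1 /\ cnt c.1 (take (Tw w c) w) = c.2.
Proof.
have hj : (c.2 : nat) < cnt c.1 w by rewrite hw_cnt.
have [k [hk hn hc]] := exist_pos hj.
rewrite hw_size in hk.
by rewrite (@TwE w c (Ordinal hk)).
Qed.

Lemma Tw_syt : Tw w \in SYT n.
Proof.
rewrite inE /is_syt; apply/and4P; split.
- apply/injectiveP => c1 c2 e.
  have [a1 b1] := Tw_spec c1; have [a2 b2] := Tw_spec c2.
  rewrite e in a1 b1.
  have e1 : c1.1 = c2.1 by apply: val_inj; rewrite /= -a1 a2.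
  rewrite e1 b2 in b1.
  case: c1 c2 e1 b1 {e a1 a2 b2} => [x1 y1] [x2 y2] /= -> e2; congr pair; exact: val_inj.
- apply/forallP => k; apply/existsP.
  have hk : k < size w by rewrite hw_size.
  have ha : nth 3 w k < 3 := allP hw_all _ (mem_nth 3 hk).
  have hj : cnt (nth 3 w k) (take k w) < n.
    have := cnt_take_le (nth 3 w k) w (hk : k.+1 <= size w).
    by rewrite cnt_take_S // eqxx cnt_take_all (hw_cnt (Ordinal ha)) addn1.
  by exists (Ordinal ha, Ordinal hj); apply/eqP; apply: TwE.
- apply/forallP => a; apply/forallP => b1; apply/forallP => b2; apply/implyP => hb.
  have [n1 c1] := Tw_spec (a, b1); have [n2 c2] := Tw_spec (a, b2).
  rewrite /= in n1 c1 n2 c2.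
  rewrite ltnNge; apply/negP => hle; have := cnt_take_le a w hle.
  by rewrite c1 c2; lia.
- apply/forallP => b; apply/forallP => a1; apply/forallP => a2; apply/implyP => hlt.
  have [n1 c1] := Tw_spec (a1, b); have [n2 c2] := Tw_spec (a2, b).
  rewrite /= in n1 c1 n2 c2.
  have hk2 : Tw w (a2, b) < size w by rewrite hw_size.
  have := hw_latt (Tw w (a2, b)).+1 hlt.
  rewrite !cnt_take_S // n2 eqxx c2.
  have -> : ((a2 : nat) == a1) = false by apply/negbTE; rewrite neq_ltn hlt orbT.
  rewrite addn0 /= => hc.
  rewrite ltnNge; apply/negP => hle; have := cnt_take_le a1 w hle.
  by rewrite c1; lia.
Qed.

End Tw.


Definition rowof n (T : filling n) (k : nat) : nat :=
  if [pick c | (T c : nat) == k] is Some c then (c.1 : nat) else 0.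

Definition word n (T : filling n) : seq nat := [seq rowof T k | k <- iota 0 (3 * n)].

Lemma word_size n (T : filling n) : size (word T) = 3 * n.
Proof. by rewrite size_map size_iota. Qed.

Lemma word_nth n (T : filling n) k : k < 3 * n -> nth 3 (word T) k = rowof T k.
Proof. by move=> hk; rewrite (nth_map 0) ?size_iota // nth_iota. Qed.

Lemma rowof_T n (T : filling n) c : injective T -> rowof T (T c) = c.1.
Proof.
move=> inj; rewrite /rowof; case: pickP => [c' /eqP h | /(_ c)]; last by rewrite eqxx.
by rewrite (inj c' c (val_inj h)).
Qed.

Lemma card_lt_ord n k : k <= n -> #|[set j : 'I_n | j < k]| = k.
Proof.
elim: k => [|k IH] hk.
  by apply/eqP; rewrite cards_eq0; apply/eqP/setP => j; rewrite !inE ltn0.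
have -> : [set j : 'I_n | j < k.+1] = (Ordinal hk) |: [set j : 'I_n | j < k].
  by apply/setP => j; rewrite !inE ltnS leq_eqVlt; congr (_ || _).
by rewrite cardsU1 inE /= ltnn IH //; lia.
Qed.

Section Word.
Variable n : nat.
Variable T : filling n.
Hypothesis hT : T \in SYT n.

Lemma T_inj : injective T.
Proof. by move: hT; rewrite inE => /and4P[/injectiveP]. Qed.
Lemma T_surj (k : 'I_(3 * n)) : exists c, T c = k.
Proof. by move: hT; rewrite inE => /and4P[_ /forallP /(_ k) /existsP [c /eqP]]; exists c. Qed.
Lemma T_row a (b1 b2 : 'I_n) : b1 < b2 -> T (a, b1) < T (a, b2).
Proof.
move: hT; rewrite inE => /and4P[_ _ /forallP /(_ a) /forallP /(_ b1) /forallP /(_ b2) /implyP H _].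
exact: H.
Qed.
Lemma T_col b (a1 a2 : 'I_3) : a1 < a2 -> T (a1, b) < T (a2, b).
Proof.
move: hT; rewrite inE => /and4P[_ _ _ /forallP /(_ b) /forallP /(_ a1) /forallP /(_ a2) /implyP H].
exact: H.
Qed.

Lemma cnt_word (a : 'I_3) k : cnt a (take k (word T)) = #|[set j : 'I_n | T (a, j) < k]|.
Proof.
elim: k => [|k IH].
  rewrite take0 cnt_nil; apply/esym/eqP; rewrite cards_eq0; apply/eqP/setP => j.
  by rewrite !inE ltn0.
case: (ltnP k (3 * n)) => hk.
  rewrite cnt_take_S ?word_size // word_nth // IH.
  have [c hc] := T_surj (Ordinal hk).
  have hc' : (T c : nat) = k by rewrite hc.
  rewrite -hc' rowof_T; last exact: T_inj.
  case: (eqVneq (c.1 : nat) a) => ha.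
    have ha' : c.1 = a by apply: val_inj.
    have -> : [set j | T (a, j) < (T c).+1] = c.2 |: [set j | T (a, j) < T c].
      apply/setP => j; rewrite !inE ltnS leq_eqVlt; congr (_ || _).
      case: (eqVneq j c.2) => [->|hj]; first by rewrite -ha' -surjective_pairing !eqxx.
      apply/negbTE; apply: contra hj => /eqP /val_inj /T_inj e; by rewrite -e.
    rewrite cardsU1 inE -ha' -surjective_pairing ltnn /= addnC.
    done.
  have -> : [set j | T (a, j) < (T c).+1] = [set j | T (a, j) < T c].
    apply/setP => j; rewrite !inE ltnS leq_eqVlt.
    case: (eqVneq (T (a, j) : nat) (T c)) => [/val_inj/T_inj e|] //=.
    by rewrite -e /= eqxx in ha.
  by rewrite /= addn0.
rewrite !take_oversize ?word_size // in IH *; last lia.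
rewrite IH; apply: eq_card => j; rewrite !inE.
have := ltn_ord (T (a, j)); move=> h.
rewrite (leq_trans h hk) (leq_trans h (leqW hk)) //.
Qed.

Lemma word_cnt (a : 'I_3) : cnt a (word T) = n.
Proof.
rewrite -(take_oversize (leqnn (size (word T)))) word_size cnt_word.
rewrite -[RHS](card_ord n); apply: eq_card => j; rewrite !inE.
by rewrite ltn_ord.
Qed.

Lemma word_take (c : 'I_3 * 'I_n) : cnt c.1 (take (T c) (word T)) = c.2.
Proof.
case: c => a j /=; rewrite cnt_word -[RHS](@card_lt_ord n j (ltnW (ltn_ord j))).
apply: eq_card => j'; rewrite !inE.
case: (ltnP j' j) => h; first exact: T_row.
apply/negbTE; rewrite -leqNgt.
case: (ltngtP j j') => h'; [exact: ltnW (T_row a h') | lia | by rewrite (val_inj h')].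
Qed.

Definition o0 : 'I_3 := @Ordinal 3 0 isT.
Definition o1 : 'I_3 := @Ordinal 3 1 isT.
Definition o2 : 'I_3 := @Ordinal 3 2 isT.

Lemma word_E : Ep (3 * n) n n n (word T).
Proof.
split.
- exact: word_size.
- apply/allP => x /mapP [k _ ->]; rewrite /rowof; case: pickP => // c _.
- split; [exact: (word_cnt o0) | split; [exact: (word_cnt o1) | exact: (word_cnt o2)]].
- rewrite subnn => k; rewrite !addn0.
  move: (cnt_word o0 k) (cnt_word o1 k) (cnt_word o2 k) => /= -> -> ->.
  by split; apply: subset_leq_card; apply/subsetP => j; rewrite !inE => h;
    apply: ltn_trans h; apply: T_col.
Qed.

Lemma T_Tw (d : 'I_(3 * n)) : T = Tw d (word T).
Proof.
apply/ffunP => c; apply/esym; apply: TwE.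
  by rewrite word_nth // rowof_T //; exact: T_inj.
exact: word_take.
Qed.

End Word.

Lemma word_Tw n (d : 'I_(3 * n)) w : Ep (3 * n) n n n w -> word (Tw d w) = w.
Proof.
move=> hw.
have hT := Tw_syt d hw.
have inj := T_inj hT.
apply: (@eq_from_nth _ 3); first by rewrite word_size (hw_size hw).
move=> i; rewrite word_size => hi.
rewrite word_nth //.
have hi' : i < size w by rewrite (hw_size hw).
have ha : nth 3 w i < 3 := allP (hw_all hw) _ (mem_nth 3 hi').
have hj : cnt (nth 3 w i) (take i w) < n.
  have := cnt_take_le (nth 3 w i) w (hi' : i.+1 <= size w).
  by rewrite cnt_take_S // eqxx cnt_take_all (hw_cnt hw (Ordinal ha)) addn1.
have e := @TwE n d w (Ordinal ha, Ordinal hj) (Ordinal hi) erefl erefl.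
transitivity (rowof (Tw d w) (Tw d w (Ordinal ha, Ordinal hj))); first by rewrite e.
by rewrite rowof_T.
Qed.


Arguments E : simpl never.

Lemma Edec k : E (3 * k.+2) k.+2 k.+2 k.+2 =
  map (cons 0) (map (cons 0) (E (3*k+2).+2 k.+2 k.+2 k) ++
    map (cons 1) (map (cons 0) (E (3*k+2).+1 k.+2 k.+1 k) ++
      map (cons 2) (map (cons 0) (E (3*k+2) k.+1 k.+1 k)))).
Proof.
rewrite (_ : 3 * k.+2 = (3*k+2).+4); last lia.
rewrite E_S ltnn /= cats0.
rewrite E_S ltnSn ltnn /= cats0.
congr (map _ (_ ++ map _ _)).
rewrite E_S ltnn ltnSn /=.
congr (_ ++ map _ _).
by rewrite E_S ltnn /= cats0.
Qed.

Lemma entry12 k (T : filling k.+2) : entry T 1 2 = (T (@Ordinal 3 0 isT, @Ordinal k.+2 1 isT)).+1.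
Proof. rewrite /entry /= !insubT /=; congr (T (_, _)).+1; exact: val_inj. Qed.

Section Main.
Variable k : nat.
Local Notation n := k.+2.

Lemma hd0 : 0 < 3 * n. Proof. lia. Qed.
Definition d0 : 'I_(3 * n) := Ordinal hd0.

Local Notation E3 := (E (3 * n) n n n).

Lemma ent2 u : entry (Tw d0 [:: 0, 0 & u]) 1 2 = 2.
Proof.
have h : 1 < 3 * n by lia.
by rewrite entry12 (@TwE n d0 _ _ (Ordinal h)).
Qed.

Lemma ent3 u : entry (Tw d0 [:: 0, 1, 0 & u]) 1 2 = 3.
Proof.
have h : 2 < 3 * n by lia.
by rewrite entry12 (@TwE n d0 _ _ (Ordinal h)).
Qed.

Lemma ent4 u : entry (Tw d0 [:: 0, 1, 2, 0 & u]) 1 2 = 4.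
Proof.
have h : 3 < 3 * n by lia.
by rewrite entry12 (@TwE n d0 _ _ (Ordinal h)).
Qed.

Lemma memE3 w : (w \in E3) <-> Ep (3 * n) n n n w.
Proof. exact: (memEw w (3 * n) (leqnn n) (leqnn n)). Qed.

Lemma perm_SYT : perm_eq (enum (SYT n)) (map (Tw d0) E3).
Proof.
apply: uniq_perm.
- exact: enum_uniq.
- rewrite map_inj_in_uniq ?uniqE // => w1 w2 /memE3 h1 /memE3 h2 e.
  by rewrite -(word_Tw d0 h1) -(word_Tw d0 h2) e.
move=> T; rewrite mem_enum; apply/idP/idP.
  move=> hT; rewrite (T_Tw hT d0); apply: map_f; apply/memE3; exact: word_E.
by case/mapP => w /memE3 hw ->; apply: Tw_syt.
Qed.

Lemma partA T : T \in SYT n -> entry T 1 2 \in [:: 2; 3; 4].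
Proof.
move=> hT; rewrite (T_Tw hT d0).
have : word T \in E3 by apply/memE3; exact: word_E.
rewrite Edec => /mapP [w1 hw1 ->]; move: hw1; rewrite mem_cat => /orP [].
  by move/mapP => [u _ ->]; rewrite ent2.
move=> /mapP [w2 hw2 ->]; move: hw2; rewrite mem_cat => /orP [] /mapP [w3 hw3 ->].
  by rewrite ent3.
by move: hw3 => /mapP [u _ ->]; rewrite ent4.
Qed.

Lemma card_SYT : #|SYT n| = size E3.
Proof. by rewrite cardE (perm_size perm_SYT) size_map. Qed.

Import GRing.Theory Num.Theory.
Open Scope ring_scope.

Lemma sum_const_seq (R : nmodType) (c : R) (s : seq (seq nat)) :
  \sum_(u <- s) c = c *+ size s.
Proof. elim: s => [|a s IH]; first by rewrite big_nil. by rewrite big_cons IH /= mulrS. Qed.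

Lemma sum_SYT (R : numFieldType) (x : R) :
  \sum_(T in SYT n) x ^+ entry T 1 2 =
    x ^+ 2 *+ size (E (3*k+2).+2 k.+2 k.+2 k) + x ^+ 3 *+ size (E (3*k+2).+1 k.+2 k.+1 k)
    + x ^+ 4 *+ size (E (3*k+2) k.+1 k.+1 k).
rewrite -big_enum (perm_big _ perm_SYT) big_map Edec.
move: (E (3*k+2).+2 n n k) (E (3*k+2).+1 n k.+1 k) (E (3*k+2) k.+1 k.+1 k) => Ea Eb Ec.
rewrite big_map !big_cat !big_map !big_cat !big_map.
rewrite (eq_bigr (fun _ => x ^+ 2)); last by move=> u _; rewrite ent2.
rewrite (@eq_bigr _ _ _ _ Eb _ _ (fun _ => x ^+ 3)); last by move=> u _; rewrite ent3.
rewrite (@eq_bigr _ _ _ _ Ec _ _ (fun _ => x ^+ 4)); last by move=> u _; rewrite ent4.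
by rewrite -[RHS]addrA -!sum_const_seq.
Qed.

End Main.


Lemma sizes k :
  [/\ size (E (3 * k.+2) k.+2 k.+2 k.+2) * ((k.+4)`! * (k.+3)`! * (k.+2)`!) = (3 * k.+2)`! * 2,
      size (E (3*k+2).+2 k.+2 k.+2 k) * ((k.+4)`! * (k.+3)`! * k`!) = ((3*k+2).+2)`! * 12,
      size (E (3*k+2).+1 k.+2 k.+1 k) * ((k.+4)`! * (k.+2)`! * k`!) = ((3*k+2).+1)`! * 16 &
      size (E (3*k+2) k.+1 k.+1 k) * ((k.+3)`! * (k.+2)`! * k`!) = (3*k+2)`! * 6].
Proof.
split.
- have := @Ecard (3 * k.+2) k.+2 0 0 ltac:(lia); by rewrite !addn0.
- have := @Ecard (3*k+2).+2 k 2 0 ltac:(lia); by rewrite !addn0 !addn2.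
- have := @Ecard (3*k+2).+1 k 1 1 ltac:(lia); by rewrite !addn1.
- have := @Ecard (3*k+2) k 1 0 ltac:(lia); by rewrite !addn0 !addn1.
Qed.

Lemma ratios k s0 sa sb sc :
  s0 * ((k.+4)`! * (k.+3)`! * (k.+2)`!) = (3 * k.+2)`! * 2 ->
  sa * ((k.+4)`! * (k.+3)`! * k`!) = ((3*k+2).+2)`! * 12 ->
  sb * ((k.+4)`! * (k.+2)`! * k`!) = ((3*k+2).+1)`! * 16 ->
  sc * ((k.+3)`! * (k.+2)`! * k`!) = (3*k+2)`! * 6 ->
  [/\ 0 < s0, sa * (3 * k + 5) = 2 * (k + 1) * s0,
      sb * (3 * (3 * k + 5) * (3 * k + 4)) = 8 * (k + 1) * (k + 3) * s0 &
      sc * (3 * (3 * k + 5) * (3 * k + 4)) = (k + 3) * (k + 4) * s0].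
Proof.
rewrite (_ : 3 * k.+2 = (3*k+2).+4); last lia.
rewrite !factS.
move: (k`!) (fact_gt0 k) ((3*k+2)`!) (fact_gt0 (3*k+2)) => G hG F hF e0 ea eb ec.
set A0 := (k.+4 * (k.+3 * (k.+2 * (k.+1 * G))) * (k.+3 * (k.+2 * (k.+1 * G))) * (k.+2 * (k.+1 * G))) in e0.
have hA0 : 0 < A0 by rewrite /A0 !muln_gt0 hG.
split.
- rewrite lt0n; apply/eqP => h; move: e0; rewrite h mul0n => /esym/eqP.
  by rewrite !muln_eq0 (gtn_eqF hF).
- apply/eqP; rewrite -(eqn_pmul2r hA0); apply/eqP.
  transitivity ((3 * k + 5) * k.+2 * k.+1 * (sa * (k.+4 * (k.+3 * (k.+2 * (k.+1 * G))) *
     (k.+3 * (k.+2 * (k.+1 * G))) * G))); first by rewrite /A0; ring.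
  rewrite ea.
  transitivity (2 * (k + 1) * (s0 * A0)); last by ring.
  rewrite e0; ring.
- apply/eqP; rewrite -(eqn_pmul2r hA0); apply/eqP.
  transitivity (3 * (3 * k + 5) * (3 * k + 4) * k.+3 * k.+2 * k.+1 * (sb *
     (k.+4 * (k.+3 * (k.+2 * (k.+1 * G))) * (k.+2 * (k.+1 * G)) * G))); first by rewrite /A0; ring.
  rewrite eb.
  transitivity (8 * (k + 1) * (k + 3) * (s0 * A0)); last by ring.
  rewrite e0; ring.
- apply/eqP; rewrite -(eqn_pmul2r hA0); apply/eqP.
  transitivity (3 * (3 * k + 5) * (3 * k + 4) * k.+4 * k.+3 * k.+2 * k.+1 * (sc *
     ((k.+3 * (k.+2 * (k.+1 * G))) * (k.+2 * (k.+1 * G)) * G))); first by rewrite /A0; ring.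
  rewrite ec.
  transitivity ((k + 3) * (k + 4) * (s0 * A0)); last by ring.
  rewrite e0; ring.
Qed.

Open Scope ring_scope.

Lemma final_alg (R : numFieldType) (x : R) (k s0 sa sb sc : nat) :
  (0 < s0)%N -> (sa * (3 * k + 5) = 2 * (k + 1) * s0)%N ->
  (sb * (3 * (3 * k + 5) * (3 * k + 4)) = 8 * (k + 1) * (k + 3) * s0)%N ->
  (sc * (3 * (3 * k + 5) * (3 * k + 4)) = (k + 3) * (k + 4) * s0)%N ->
  (x ^+ 2 *+ sa + x ^+ 3 *+ sb + x ^+ 4 *+ sc) / s0%:R =
       (2 * (k.+2%:R - 1)) / (3 * k.+2%:R - 1) * x ^+ 2
     + (8 * (k.+2%:R - 1) * (k.+2%:R + 1)) / (3 * (3 * k.+2%:R - 1) * (3 * k.+2%:R - 2)) * x ^+ 3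
     + ((k.+2%:R + 1) * (k.+2%:R + 2)) / (3 * (3 * k.+2%:R - 1) * (3 * k.+2%:R - 2)) * x ^+ 4.
Proof.
move=> hs ia ib ic.
set K : R := k%:R.
have ia' : sa%:R * (3 * K + 5) = 2 * (K + 1) * s0%:R.
  transitivity ((sa * (3 * k + 5))%:R : R); first by rewrite /K; ring.
  by rewrite ia /K; ring.
have ib' : sb%:R * (3 * (3 * K + 5) * (3 * K + 4)) = 8 * (K + 1) * (K + 3) * s0%:R.
  transitivity ((sb * (3 * (3 * k + 5) * (3 * k + 4)))%:R : R); first by rewrite /K; ring.
  by rewrite ib /K; ring.
have ic' : sc%:R * (3 * (3 * K + 5) * (3 * K + 4)) = (K + 3) * (K + 4) * s0%:R.
  transitivity ((sc * (3 * (3 * k + 5) * (3 * k + 4)))%:R : R); first by rewrite /K; ring.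
  by rewrite ic /K; ring.
have hn : (k.+2)%:R = K + 2 by rewrite -addn2 natrD.
rewrite -[x ^+ 2 *+ sa]mulr_natr -[x ^+ 3 *+ sb]mulr_natr -[x ^+ 4 *+ sc]mulr_natr hn.
have hK : 0 <= K by apply: ler0n.
have hs' : s0%:R != 0 :> R by rewrite pnatr_eq0 -lt0n.
have h1 : 3 * K + 5 != 0.
  have -> : 3 * K + 5 = (3 * k + 5)%:R by rewrite /K; ring.
  by rewrite pnatr_eq0; lia.
have h4 : 3 * K + 4 != 0.
  have -> : 3 * K + 4 = (3 * k + 4)%:R by rewrite /K; ring.
  by rewrite pnatr_eq0; lia.
have h3 : 3 != 0 :> R by rewrite pnatr_eq0.
have h2 : 3 * (3 * K + 5) * (3 * K + 4) != 0 by rewrite !mulf_neq0.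
have ha : sa%:R = 2 * (K + 1) * s0%:R / (3 * K + 5) by rewrite -ia' mulfK.
have hb : sb%:R = 8 * (K + 1) * (K + 3) * s0%:R / (3 * (3 * K + 5) * (3 * K + 4)) by rewrite -ib' mulfK.
have hc : sc%:R = (K + 3) * (K + 4) * s0%:R / (3 * (3 * K + 5) * (3 * K + 4)) by rewrite -ic' mulfK.
rewrite ha hb hc.
rewrite (_ : 3 * (K + 2) - 1 = 3 * K + 5); last by ring.
rewrite (_ : 3 * (K + 2) - 2 = 3 * K + 4); last by ring.
rewrite (_ : K + 2 - 1 = K + 1); last by ring.
rewrite (_ : K + 2 + 1 = K + 3); last by ring.
rewrite (_ : K + 2 + 2 = K + 4); last by ring.
by field; rewrite h4 h1 hs'.
Qed.

Unset Implicit Arguments.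
Local Open Scope ring_scope.

Theorem mainTheorem8 (n : nat) (hn : (2 <= n)%N) :
  (forall T : filling n, T \in SYT n -> entry T 1 2 \in [:: 2; 3; 4]%N) /\
  (forall (R : numFieldType) (x : R),
     (\sum_(T in SYT n) x ^+ entry T 1 2) / #|SYT n|%:R =
       (2 * (n%:R - 1)) / (3 * n%:R - 1) * x ^+ 2
     + (8 * (n%:R - 1) * (n%:R + 1)) / (3 * (3 * n%:R - 1) * (3 * n%:R - 2)) * x ^+ 3
     + ((n%:R + 1) * (n%:R + 2)) / (3 * (3 * n%:R - 1) * (3 * n%:R - 2)) * x ^+ 4).
Proof.
case: n hn => [|[|k]] // _.
split; first exact: partA.
move=> R x.
rewrite sum_SYT card_SYT.
have [e0 ea eb ec] := sizes k.
have [hs ia ib ic] := ratios e0 ea eb ec.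
exact: final_alg.
Qed.
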